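(* Let $\lambda=(\lambda_1,\ldots,\lambda_n)\in\mathbb{R}_{<0}^n$ have pairwise distinct entries. Then $\nu_{0,\lambda}(t)\le 1$ and $\dot\nu_{0,\lambda}(t)\le 0$ for all $t\ge 0$, and $\nu_{0,\lambda}(0)=1$.
   Context: $V_\lambda$ is the $n\times n$ Vandermonde matrix with $(i,j)$ entry $\lambda_j^{i-1}$, and $[\nu_{0,\lambda}(t),\ldots,\nu_{n-1,\lambda}(t)]=[e^{\lambda_1 t},\ldots,e^{\lambda_n t}]V_\lambda^{-1}$. *)

(* Defs.v *)
From HB Require Import structures.
From mathcomp Require Import all_boot all_order all_algebra.
From mathcomp Require Import all_classical all_reals all_analysis.
Set Implicit Arguments. Unset Strict Implicit. Unset Printing Implicit Defensive.
Import Order.TTheory GRing.Theory Num.Theory.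
Local Open Scope ring_scope.

(* V_lambda: (i,j) entry lambda_j^(i-1) (0-indexed: lam 0 j ^+ i) = mathcomp's Vandermonde. *)
Definition Vlam (R : realType) (n : nat) (lam : 'rV[R]_n) : 'M[R]_n :=
  Vandermonde n lam.

Definition nu_vec (R : realType) (n : nat) (lam : 'rV[R]_n) (t : R) : 'rV[R]_n :=
  (\row_j expR (lam 0 j * t)) *m invmx (Vlam lam).

(* nu_{0,lam}; n.+1 entries so that index 0 exists *)
Definition nu0 (R : realType) (n : nat) (lam : 'rV[R]_n.+1) (t : R) : R :=
  nu_vec lam t 0 0.

(* Main.v *)
Require Import Defs.
From HB Require Import structures.
From mathcomp Require Import all_boot all_order all_algebra.
From mathcomp Require Import all_classical all_reals all_analysis.
From mathcomp Require Import ring lra.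
Import Order.TTheory GRing.Theory Num.Theory.
Import numFieldNormedType.Exports.
Local Open Scope ring_scope.

Section Alg.
Variable R : realType.

Definition Pp (s : seq R) (x : R) : {poly R} := \prod_(k <- s | k != x) ('X - k%:P).
Definition cc (s : seq R) (x : R) : R := (\prod_(k <- s | k != x) (x - k))^-1.

Lemma Pp_eval (s : seq R) (x y : R) : (Pp s x).[y] = \prod_(k <- s | k != x) (y - k).
Proof. by rewrite /Pp horner_prod; apply: eq_bigr => k _; rewrite hornerXsubC. Qed.

Lemma Pp_size (s : seq R) (x : R) : uniq s -> x \in s -> size (Pp s x) = size s.
Proof.
move=> us xs; rewrite /Pp -big_filter size_prod_XsubC.
have := size_rem xs; rewrite rem_filter // => ->.
by apply: prednK; case: s xs us.
Qed.

Lemma Pp_self_neq0 (s : seq R) (x : R) : uniq s -> \prod_(k <- s | k != x) (x - k) != 0.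
Proof.
move=> us; rewrite prodf_seq_neq0; apply/allP => k _ /=.
by apply/implyP => kx; rewrite subr_eq0 eq_sym.
Qed.

Lemma Pp_other (s : seq R) (x y : R) : y \in s -> y != x -> (Pp s x).[y] = 0.
Proof.
move=> ys yx; rewrite Pp_eval.
rewrite (big_rem y) //= yx subrr mul0r //.
Qed.

Lemma lagrange (s : seq R) (p : {poly R}) : uniq s -> (size p <= size s)%N ->
  \sum_(x <- s) (p.[x] * cc s x) *: Pp s x = p.
Proof.
move=> us sp; apply/eqP; rewrite -subr_eq0; apply/negPn/negP => Q0.
have := max_poly_roots Q0 _ us.
have -> : all (root (\sum_(x <- s) (p.[x] * cc s x) *: Pp s x - p)) s.
  apply/allP => y ys; rewrite /root hornerD hornerN horner_sum.
  rewrite (bigD1_seq y) //= big1_seq ?addr0.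
    rewrite hornerZ Pp_eval /cc -mulrA mulVf ?mulr1 ?subrr //.
    exact: Pp_self_neq0.
  by move=> x /andP[xy xs]; rewrite hornerZ Pp_other ?mulr0 // eq_sym.
move=> /(_ isT); apply/negP; rewrite -leqNgt.
apply: (leq_trans (size_polyD _ _)); rewrite size_polyN geq_max sp andbT.
apply: (leq_trans (size_sum _ _ _)); rewrite big_seq.
elim/big_ind: _ => //; first by move=> a b; rewrite geq_max => ->.
move=> x xs; apply: (leq_trans (size_scale_leq _ _)); rewrite Pp_size //.
Qed.

Lemma is_derive_lin (x t : R) : is_derive t 1 (fun u : R => x * u) x.
Proof.
have -> : (fun u : R => x * u) = x *: (@id R) by apply/funext => u.
apply: (is_derive_eq (is_deriveZ x (is_derive_id t 1))). by rewrite scaler1.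
Qed.
Lemma is_derive_expl (a x t : R) :
  is_derive t 1 (fun u : R => a * expR (x * u)) (a * x * expR (x * t)).
Proof.
have d1 := is_derive_lin x t.
have d1' : derivable (fun u : R => x * u) t 1 := @ex_derive _ _ _ _ _ _ _ d1.
have dc : derivable (expR \o (fun u : R => x * u)) t 1.
  apply/derivable1_diffP; apply: differentiable_comp.
    by apply/derivable1_diffP.
  by apply/derivable1_diffP; exact: derivable_expR.
have e : derive1 (expR \o (fun u : R => x * u)) t = x * expR (x * t).
  rewrite derive1_comp //.
  by rewrite !derive1E (@derive_val _ _ _ _ _ _ _ (is_derive_expR (x*t))) (@derive_val _ _ _ _ _ _ _ d1) mulrC.
have d2 : is_derive t 1 (expR \o (fun u : R => x * u)) (x * expR (x * t)).
  by apply: (is_derive_eq (derivableP dc)); rewrite -e derive1E.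
have -> : (fun u : R => a * expR (x * u)) = a *: (expR \o (fun u : R => x * u)) by apply/funext => u.
apply: (is_derive_eq (is_deriveZ a d2)). by rewrite /= -mulrA.
Qed.

Lemma is_derive_sumexp (s : seq R) (a : R -> R) (t : R) :
  is_derive t 1 (fun u : R => \sum_(x <- s) a x * expR (x * u))
    (\sum_(x <- s) a x * x * expR (x * t)).
Proof.
elim: s => [|y s IH].
  have -> : (fun u : R => \sum_(x <- [::]) a x * expR (x * u)) = cst 0.
    by apply/funext => u; rewrite big_nil.
  rewrite big_nil; exact: is_derive_cst.
have -> : (fun u : R => \sum_(x <- y :: s) a x * expR (x * u)) =
  (fun u : R => a y * expR (y * u)) + (fun u : R => \sum_(x <- s) a x * expR (x * u)).
  by apply/funext => u; rewrite big_cons.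
rewrite big_cons; apply: is_deriveD => //; exact: is_derive_expl.
Qed.

Lemma is_derive_sumexp2 (s : seq R) (a b : R -> R) (t : R) :
  is_derive t 1 (fun u : R => \sum_(x <- s) a x * expR (b x * u))
    (\sum_(x <- s) a x * b x * expR (b x * t)).
Proof.
elim: s => [|y s IH].
  have -> : (fun u : R => \sum_(x <- [::]) a x * expR (b x * u)) = cst 0.
    by apply/funext => u; rewrite big_nil.
  rewrite big_nil; exact: is_derive_cst.
have -> : (fun u : R => \sum_(x <- y :: s) a x * expR (b x * u)) =
  (fun u : R => a y * expR (b y * u)) + (fun u : R => \sum_(x <- s) a x * expR (b x * u)).
  by apply/funext => u; rewrite big_cons.
rewrite big_cons; apply: is_deriveD => //; exact: is_derive_expl.
Qed.

Lemma mono_ge (f df : R -> R) (t : R) : 0 <= t ->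
  (forall x : R, is_derive x (1 : R) f (df x)) -> (forall x, 0 <= x -> 0 <= df x) ->
  f 0 <= f t.
Proof.
move=> t0 H dpos.
case: (MVT_segment t0 (fun x _ => H x)) => [|c cI e].
  have cf : continuous f.
    move=> x; have : derivable f x 1 := (@ex_derive _ _ _ _ _ _ _ (H x)).
    by move/derivable1_diffP/differentiable_continuous.
  exact: (continuous_subspaceT cf).
rewrite -subr_ge0 e subr0 mulr_ge0 // dpos //.
by move: cI; rewrite in_itv /= => /andP[].
Qed.

Lemma mono_le (f df : R -> R) (t : R) : 0 <= t ->
  (forall x : R, is_derive x (1 : R) f (df x)) -> (forall x, 0 <= x -> df x <= 0) ->
  f t <= f 0.
Proof.
move=> t0 H dneg.
case: (MVT_segment t0 (fun x _ => H x)) => [|c cI e].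
  have cf : continuous f.
    move=> x; have : derivable f x 1 := (@ex_derive _ _ _ _ _ _ _ (H x)).
    by move/derivable1_diffP/differentiable_continuous.
  exact: (continuous_subspaceT cf).
rewrite -subr_le0 e subr0 mulr_le0_ge0 // dneg //.
by move: cI; rewrite in_itv /= => /andP[].
Qed.

Definition uu (s : seq R) (x : R) : R := (Pp s x).[0] * cc s x.
Definition D (s : seq R) (t : R) : R := \sum_(x <- s) cc s x * expR (x * t).

Lemma vand_id (s : seq R) (i : nat) : uniq s -> (i < size s)%N ->
  \sum_(x <- s) x ^+ i * uu s x = (i == 0)%:R.
Proof.
move=> us isz.
have := @lagrange s 'X^i us; rewrite size_polyXn => /(_ isz) /(congr1 (fun p => p.[0])).
rewrite horner_sum hornerXn expr0n /= => <-.
apply: eq_bigr => x _; rewrite hornerZ hornerXn /uu; ring.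
Qed.

Lemma x_Pp0 (s : seq R) (x : R) : uniq s -> x \in s ->
  x * (Pp s x).[0] = - \prod_(k <- s) (- k).
Proof.
move=> us xs; rewrite Pp_eval (bigD1_seq x) //= mulNr opprK; congr (_ * _).
by apply: eq_bigr => k _; rewrite sub0r.
Qed.

Lemma sum_cc0 (s : seq R) : uniq s -> 0 \notin s -> (1 < size s)%N ->
  \sum_(x <- s) cc s x = 0.
Proof.
move=> us s0 ss.
have := @vand_id s 1 us ss; under eq_bigr do rewrite expr1.
rewrite big_seq (eq_bigr (fun x => - \prod_(k <- s) (- k) * cc s x)); last first.
  by move=> x xs; rewrite /uu mulrA x_Pp0.
rewrite -big_seq -mulr_sumr => /eqP; rewrite mulf_eq0 oppr_eq0 => /orP[|/eqP //].
rewrite prodf_seq_eq0 => /hasP[k ks /=]; rewrite oppr_eq0 => /eqP k0.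
by move: s0; rewrite -k0 ks.
Qed.

Lemma cc_cons (a x : R) (s : seq R) : x != a ->
  cc (a :: s) x * (x - a) = cc s x.
Proof.
move=> xa; rewrite /cc big_cons eq_sym xa invfM mulrC mulrA mulfV ?mul1r //.
by rewrite subr_eq0.
Qed.

Lemma D_rec (a : R) (s : seq R) (t : R) : a \notin s ->
  \sum_(x <- a :: s) cc (a :: s) x * x * expR (x * t) - a * D (a :: s) t = D s t.
Proof.
move=> as_; rewrite /D mulr_sumr -sumrB big_cons.
have -> : cc (a :: s) a * a * expR (a * t) - a * (cc (a :: s) a * expR (a * t)) = 0 by ring.
rewrite add0r !big_seq; apply: eq_bigr => x xs.
have xa : x != a by apply: contraNneq as_ => <-.
by rewrite -(@cc_cons a x s xa); ring.
Qed.

Lemma D_ge0 (s : seq R) : uniq s -> 0 \notin s -> s != [::] ->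
  forall t, 0 <= t -> 0 <= D s t.
Proof.
elim: s => [//|a s IH] /= /andP[as_ us]; rewrite inE negb_or => /andP[a0 s0] _ t t0.
case: s IH as_ us s0 => [|b s'] IH as_ us s0.
  by rewrite /D /cc !big_cons !big_nil eqxx /= invr1 addr0 mul1r expR_ge0.
set s := b :: s' in IH as_ us s0 *.
pose G u := expR (- a * u) * D (a :: s) u.
have dG : forall u, is_derive u (1 : R) G (expR (- a * u) * D s u).
  move=> u.
  have h2 := is_derive_sumexp2 (a :: s) (cc (a :: s)) (fun x => x - a) u.
  have -> : G = (fun u => \sum_(x <- a :: s) cc (a :: s) x * expR ((x - a) * u)).
    apply/funext => v; rewrite /G /D mulr_sumr; apply: eq_bigr => x _.
    by rewrite mulrCA -expRD mulrBl mulNr addrC.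
  apply: (is_derive_eq h2).
  rewrite big_cons subrr mulr0 mul0r add0r /D mulr_sumr !big_seq; apply: eq_bigr => x xs.
  have xa : x != a by apply: contraNneq as_ => <-.
  rewrite -(@cc_cons a x s xa) [RHS]mulrCA -expRD; congr (_ * expR _); ring.
have G0 : G 0 = 0.
  rewrite /G mulr0 expR0 mul1r /D (eq_bigr (fun x => cc (a :: s) x)).
    apply: sum_cc0 => //=; first by rewrite as_; exact: us.
    by rewrite in_cons negb_or a0.
  by move=> x _; rewrite mulr0 expR0 mulr1.
have Gt : 0 <= G t.
  rewrite -G0; apply: (@mono_ge G _ t t0 dG) => x x0.
  exact: mulr_ge0 (expR_ge0 _) (IH us s0 isT x x0).
have -> : D (a :: s) t = expR (a * t) * G t.
  by rewrite /G mulrA -expRD mulNr addrN expR0 mul1r.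
exact: mulr_ge0 (expR_ge0 _) Gt.
Qed.

End Alg.

Theorem proposition9 (R : realType) (n : nat) (lam : 'rV[R]_n.+1)
  (hneg : forall j, lam 0 j < 0)
  (hdist : injective (fun j => lam 0 j)) :
  (forall t : R, 0 <= t -> nu0 lam t <= 1 /\ derive1 (nu0 lam) t <= 0)
  /\ nu0 lam 0 = 1.
Proof.
pose s := [seq lam 0 j | j <- enum 'I_n.+1].
have us : uniq s by rewrite map_inj_uniq ?enum_uniq.
have ss : size s = n.+1 by rewrite size_map size_enum_ord.
have sneg : forall x, x \in s -> x < 0.
  by move=> x /mapP[j _ ->]; exact: hneg.
have s0 : 0 \notin s by apply/negP => /sneg; rewrite ltxx.
have sum_s : forall F : R -> R, \sum_(x <- s) F x = \sum_j F (lam 0 j).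
  by move=> F; rewrite big_map big_enum.
have Vu : Vlam lam \in unitmx.
  rewrite unitmxE unitfE /Vlam det_Vandermonde.
  apply/prodf_neq0 => i _; apply/prodf_neq0 => j ij.
  rewrite subr_eq0; apply/eqP => /hdist e.
  by move: ij; rewrite e ltnn.
pose w : 'cV[R]_n.+1 := \col_j @uu R s (lam 0 j).
have Vw : Vlam lam *m w = col 0 1%:M.
  apply/matrixP => i k; rewrite !mxE.
  have := @vand_id R s i us; rewrite ss => /(_ (ltn_ord i)); rewrite sum_s => <-.
  by apply: eq_bigr => j _; rewrite !mxE.
have invc : forall j, invmx (Vlam lam) j 0 = @uu R s (lam 0 j).
  move=> j; have := mulKmx Vu w; rewrite Vw => /matrixP /(_ j 0).
  rewrite !mxE => <-; rewrite (bigD1 0) //= big1 ?addr0; first by rewrite !mxE eqxx mulr1.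
  by move=> i i0; rewrite !mxE (negbTE i0) mulr0.
pose F t := \sum_(x <- s) @uu R s x * expR (x * t).
have hF : nu0 lam = F.
  apply/funext => t; rewrite /nu0 /nu_vec /F sum_s !mxE.
  by apply: eq_bigr => j _; rewrite !mxE invc mulrC.
pose P := \prod_(k <- s) (- k).
have P0 : 0 < P.
  rewrite /P big_seq_cond; apply: prodr_gt0 => x /andP[xs _].
  by rewrite oppr_gt0 sneg.
pose dF t := - P * @D R s t.
have dFE : forall t, is_derive t (1 : R) F (dF t).
  move=> t; apply: (is_derive_eq (@is_derive_sumexp R s (@uu R s) t)).
  rewrite /dF /D mulr_sumr !big_seq; apply: eq_bigr => x xs.
  by rewrite /uu /P -(@x_Pp0 R s x us xs); ring.
have dFle : forall t, 0 <= t -> dF t <= 0.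
  move=> t t0; rewrite /dF mulNr oppr_le0; apply: mulr_ge0; first exact: ltW.
  by apply: (@D_ge0 R s us s0 _ t t0); rewrite -size_eq0 ss.
have F0 : F 0 = 1.
  have := @vand_id R s 0 us; rewrite ss => /(_ isT) h.
  rewrite [RHS](_ : 1 = ((0 == 0)%N)%:R) // -h.
  by rewrite /F; apply: eq_bigr => x _; rewrite mulr0 expR0 mulr1 expr0 mul1r.
rewrite hF F0; split => // t t0; split.
  by rewrite -F0; exact: (@mono_le R F dF t t0 dFE dFle).
by rewrite derive1E (derive_val (is_derive := dFE t)); exact: dFle.
Qed.
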